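(* Let $\Delta$ be a $\Gamma_{m,n}$-semimodule and $x\in\mathbb{Z}$. Then: (1) the number of $m$-generators of $\Delta$ in $[x,x+n)$ equals $g(x-m)-g(x)$; (2) the number of $m$-cogenerators of $\Delta$ in $[x,x+n)$ equals $g(x)-g(x+m)$; (3) the number of $m$-generators of $\Delta$ in $[x,x+n)$ equals the number of $n$-cogenerators of $\Delta$ in $[x-m,x)$.
   Context: Let $m,n$ be coprime positive integers and $\Gamma_{m,n}=\{am+bn:a,b\in\mathbb{Z}_{\ge0}\}$. A $\Gamma_{m,n}$-semimodule is a subset $\Delta\subset\mathbb{Z}_{\ge0}$ with $\Delta+\Gamma_{m,n}\subset\Delta$. For $p\in\{m,n\}$, a $p$-generator of $\Delta$ is an integer $a\in\Delta$ with $a-p\notin\Delta$, and a $p$-cogenerator is an integer $b\notin\Delta$ with $b+p\in\Delta$. For $y\in\mathbb{Z}$, $g(y)=\#\big(([y,y+n)\cap\mathbb{Z})\setminus\Delta\big)$. Intervals denote sets of integers. *)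

(* Defs.v *)
From mathcomp Require Import all_boot all_order all_algebra.
Set Implicit Arguments. Unset Strict Implicit. Unset Printing Implicit Defensive.
Import Order.TTheory GRing.Theory Num.Theory.
Local Open Scope ring_scope.

Definition in_Gamma (m n : nat) (c : int) : Prop :=
  exists a b : nat, c = (a * m + b * n)%N%:Z.

Definition semimodule (m n : nat) (D : pred int) : Prop :=
  (forall a, D a -> 0 <= a) /\
  (forall a c, D a -> in_Gamma m n c -> D (a + c)).

Definition is_gen (D : pred int) (p : nat) (a : int) : bool :=
  D a && ~~ D (a - p%:Z).

Definition is_cogen (D : pred int) (p : nat) (b : int) : bool :=
  ~~ D b && D (b + p%:Z).

Definition count_in (P : pred int) (lo : int) (len : nat) : nat :=
  count (fun k : nat => P (lo + k%:Z)) (iota 0 len).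

Definition gfun (n : nat) (D : pred int) (y : int) : nat :=
  count_in (fun z => ~~ D z) y n.

(* Main.v *)
Require Import Defs.
From mathcomp Require Import all_boot all_order all_algebra.
From mathcomp Require Import zify.
Import Order.TTheory GRing.Theory Num.Theory.
Local Open Scope ring_scope.

Lemma count_add_gen (P Q R : pred nat) (s : seq nat) :
  (forall k, (P k : nat) + Q k = R k)%N ->
  (count P s + count Q s = count R s)%N.
Proof.
move=> H; elim: s => [|a s IH] //=.
by rewrite -H -IH addnACA.
Qed.

Lemma count_in_add (P Q R : pred int) lo len :
  (forall z, (P z : nat) + Q z = R z)%N ->
  (count_in P lo len + count_in Q lo len = count_in R lo len)%N.
Proof. by move=> H; apply: count_add_gen => k; apply: H. Qed.

Lemma count_in_shift (P : pred int) (lo : int) (c : int) len :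
  count_in (fun z => P (z + c)) lo len = count_in P (lo + c) len.
Proof.
by apply: eq_count => k /=; rewrite addrAC.
Qed.

Lemma count_in_split (P : pred int) lo a b :
  count_in P lo (a + b) = (count_in P lo a + count_in P (lo + a%:Z) b)%N.
Proof.
rewrite /count_in iotaD count_cat add0n.
rewrite (_ : iota a b = map (addn a) (iota 0 b)); last by rewrite -iotaDl addn0.
rewrite count_map; congr (_ + _)%N.
by apply: eq_count => k /=; rewrite PoszD addrA.
Qed.

Lemma gfun_compl n (D : pred int) y : (gfun n D y + count_in D y n)%N = n.
Proof.
rewrite /gfun addnC (@count_in_add D (fun z => ~~ D z) predT) //.
  by rewrite /count_in count_predT size_iota.
by move=> z /=; case: (D z).
Qed.

Theorem mainTheorem13 (m n : nat) (D : pred int) (x : int) :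
  (0 < m)%N -> (0 < n)%N -> coprime m n -> semimodule m n D ->
  [/\ (count_in (is_gen D m) x n)%:Z
        = (gfun n D (x - m%:Z))%:Z - (gfun n D x)%:Z,
      (count_in (is_cogen D m) x n)%:Z
        = (gfun n D x)%:Z - (gfun n D (x + m%:Z))%:Z
    & count_in (is_gen D m) x n = count_in (is_cogen D n) (x - m%:Z) m].
Proof.
move=> _ _ _ [_ Hcl].
have clm : forall a, D a -> D (a + m%:Z).
  by move=> a Da; apply: Hcl => //; exists 1%N, 0%N; rewrite mul1n mul0n addn0.
have cln : forall a, D a -> D (a + n%:Z).
  by move=> a Da; apply: Hcl => //; exists 0%N, 1%N; rewrite mul1n mul0n.
have E1 : (count_in (is_gen D m) x n + count_in D (x - m%:Z) n = count_in D x n)%N.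
  rewrite -(count_in_shift D x (- m%:Z)).
  apply: count_in_add => z; rewrite /is_gen.
  have := clm (z - m%:Z); rewrite subrK.
  by case: (D z); case: (D (z - m%:Z)) => // /(_ isT).
have E2 : (count_in (is_cogen D m) x n + count_in D x n = count_in D (x + m%:Z) n)%N.
  rewrite -(count_in_shift D x m%:Z).
  apply: count_in_add => z; rewrite /is_cogen.
  have := clm z.
  by case: (D z); case: (D (z + m%:Z)) => // /(_ isT).
have E3 : (count_in (is_cogen D n) (x - m%:Z) m + count_in D (x - m%:Z) m
           = count_in D (x - m%:Z + n%:Z) m)%N.
  rewrite -(count_in_shift D (x - m%:Z) n%:Z).
  apply: count_in_add => z; rewrite /is_cogen.
  have := cln z.
  by case: (D z); case: (D (z + n%:Z)) => // /(_ isT).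
have S1 := count_in_split D (x - m%:Z) m n.
have S2 := count_in_split D (x - m%:Z) n m.
rewrite subrK addnC in S1.
have G1 := gfun_compl n D (x - m%:Z).
have G2 := gfun_compl n D x.
have G3 := gfun_compl n D (x + m%:Z).
split; lia.
Qed.
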